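(* Let $\mathcal{V}_R:\mathcal{B}(\mathcal{H}_R)\to\mathcal{B}(\mathcal{H}_{R'})$ and $\mathcal{W}_A:\mathcal{B}(\mathcal{H}_A)\to\mathcal{B}(\mathcal{H}_{A'})$ be local isometric channels, $\mathcal{V}_R(X)=V X V^\dagger$, $\mathcal{W}_A(Y)=WYW^\dagger$ with $V,W$ isometries, that jointly commute with the $G$-twirl, i.e. $(\mathcal{V}_R\otimes\mathcal{W}_A)\circ\mathcal{G}_{RA}=\mathcal{G}_{R'A'}\circ(\mathcal{V}_R\otimes\mathcal{W}_A)$. Then $H_{\mathcal{V}(\eta)}(\mathcal{W}(\rho))=H_\eta(\rho)$ for every pair of quantum states $\eta$ on $\mathcal{H}_R$ and $\rho$ on $\mathcal{H}_A$.
   Context: $G$ is a compact group with normalized Haar measure $dg$. Each finite-dimensional quantum system $X$ (here $R,A,R',A'$) carries a continuous unitary representation $U_X(g)$ on $\mathcal{H}_X$; bipartite systems carry the tensor product representation. The $G$-twirl on a system $X$ is $\mathcal{G}(M)=\int dg\, U_X(g) M U_X(g)^\dagger$; in particular $\mathcal{G}_{RA}(M)=\int dg\,(U_R(g)\otimes U_A(g))M(U_R(g)\otimes U_A(g))^\dagger$. For a positive operator $\Omega_{RA}$, the conditional min-entropy is $H_{\min}(R|A)_\Omega=-\log_2\inf_{X_A\ge 0}\{\mathrm{tr}[X_A]:\mathbb{1}_R\otimes X_A\ge\Omega_{RA}\}$. For a state $\eta$ on $R$ and a state $\tau$ on $A$, $H_\eta(\tau):=H_{\min}(R|A)_{\mathcal{G}(\eta\otimes\tau)}$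 (and analogously for $R',A'$). *)

(* Defs.v *)
From HB Require Import structures.
From mathcomp Require Import all_boot all_order all_algebra.
From mathcomp Require Import all_classical all_reals all_analysis.
From mathcomp.real_closed Require Import complex mxtens.
Set Implicit Arguments. Unset Strict Implicit. Unset Printing Implicit Defensive.
Import Order.TTheory GRing.Theory Num.Theory.
Import numFieldNormedType.Exports.
Local Open Scope ring_scope.
Local Open Scope classical_set_scope.

Definition qdag (R : realType) (m n : nat) (A : 'M[R[i]]_(m, n)) : 'M[R[i]]_(n, m) :=
  (map_mx (@Num.conj R[i]) A)^T.

(** Positive semidefinite (A >= 0). Over C, <v, A v> >= 0 for all v
    (the order on C: nonnegative real). *)
Definition qpsdmx (R : realType) (n : nat) (A : 'M[R[i]]_n) : Prop :=
  forall v : 'cV[R[i]]_n, 0 <= (qdag v *m A *m v) 0 0.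

Definition qloewner_ge (R : realType) (n : nat) (A B : 'M[R[i]]_n) : Prop :=
  qpsdmx (A - B).

Definition qdensity (R : realType) (n : nat) (A : 'M[R[i]]_n) : Prop :=
  qpsdmx A /\ \tr A = 1.

Definition qisometry (R : realType) (m n : nat) (V : 'M[R[i]]_(m, n)) : Prop :=
  qdag V *m V = 1%:M.

Definition qchan (R : realType) (m n : nat) (V : 'M[R[i]]_(m, n)) (X : 'M[R[i]]_n)
  : 'M[R[i]]_m := V *m X *m qdag V.

Record CompactGroup (R : realType) := {
  cg_T :> ptopologicalType;
  cg_mul : cg_T -> cg_T -> cg_T;
  cg_inv : cg_T -> cg_T;
  cg_one : cg_T;
  cg_mulA : forall x y z, cg_mul x (cg_mul y z) = cg_mul (cg_mul x y) z;
  cg_mul1g : forall x, cg_mul cg_one x = x;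
  cg_mulVg : forall x, cg_mul (cg_inv x) x = cg_one;
  cg_mul_cont : continuous (fun p : cg_T * cg_T => cg_mul p.1 p.2);
  cg_inv_cont : continuous cg_inv;
  cg_hausdorff : hausdorff_space cg_T;
  cg_compact : compact [set: cg_T];
  cg_haar : probability (g_sigma_algebraType (@open cg_T)) R;
  cg_haar_linv : forall (g : cg_T) (A : set (g_sigma_algebraType (@open cg_T))),
      measurable A -> cg_haar ((cg_mul g) @` A) = cg_haar A;
  cg_haar_rinv : forall (g : cg_T) (A : set (g_sigma_algebraType (@open cg_T))),
      measurable A -> cg_haar ((fun x => cg_mul x g) @` A) = cg_haar A
}.

Record urep (R : realType) (G : CompactGroup R) (n : nat) := {
  ur_fun :> G -> 'M[R[i]]_n;
  ur_unitary : forall g, ur_fun g *m qdag (ur_fun g) = 1%:M;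
  ur_hom : forall g h, ur_fun (cg_mul g h) = ur_fun g *m ur_fun h;
  ur_cont_re : forall i j, continuous (fun g : G => (complex.Re (ur_fun g i j) : R));
  ur_cont_im : forall i j, continuous (fun g : G => (complex.Im (ur_fun g i j) : R))
}.

Definition qhaar_mxint (R : realType) (G : CompactGroup R) (m n : nat)
  (f : G -> 'M[R[i]]_(m, n)) : 'M[R[i]]_(m, n) :=
  \matrix_(i, j)
    Complex (Rintegral (cg_haar G) setT
               (fun g : g_sigma_algebraType (@open G) => complex.Re (f g i j)))
            (Rintegral (cg_haar G) setT
               (fun g : g_sigma_algebraType (@open G) => complex.Im (f g i j))).

Definition qtwirl (R : realType) (G : CompactGroup R) (m n : nat)
  (UX : urep G m) (UY : urep G n) (M : 'M[R[i]]_(m * n)) : 'M[R[i]]_(m * n) :=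
  qhaar_mxint (fun g => (UX g *t UY g) *m M *m qdag (UX g *t UY g)).

Definition qlog2 (R : realType) (x : R) : R := ln x / ln 2.

Definition qHmin (R : realType) (m n : nat) (Omega : 'M[R[i]]_(m * n)) : R :=
  - qlog2 (inf [set complex.Re (\tr Y) | Y in
                 [set Y : 'M[R[i]]_n | qpsdmx Y /\ qloewner_ge (1%:M *t Y) Omega]]).

Definition qHent (R : realType) (G : CompactGroup R) (m n : nat)
  (UX : urep G m) (UY : urep G n) (eta : 'M[R[i]]_m) (tau : 'M[R[i]]_n) : R :=
  qHmin (qtwirl UX UY (eta *t tau)).

(* Main.v *)
Require Import Defs.
From HB Require Import structures.
From mathcomp Require Import all_boot all_order all_algebra.
From mathcomp Require Import all_classical all_reals all_analysis.
From mathcomp.real_closed Require Import complex mxtens.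
Import Order.TTheory GRing.Theory Num.Theory.
Local Open Scope ring_scope.
Set Implicit Arguments. Unset Strict Implicit.

Section Aux.
Variable R : realType.
Local Notation C := (R[i]).

Lemma qdagM m n p (A : 'M[C]_(m,n)) (B : 'M[C]_(n,p)) :
  qdag (A *m B) = qdag B *m qdag A.
Proof. by rewrite /qdag map_mxM trmx_mul. Qed.

Lemma qdagK m n (A : 'M[C]_(m,n)) : qdag (qdag A) = A.
Proof. by apply/matrixP=> i j; rewrite /qdag !mxE conjCK. Qed.

Lemma qdagB m n (A B : 'M[C]_(m,n)) : qdag (A - B) = qdag A - qdag B.
Proof. by apply/matrixP=> i j; rewrite /qdag !mxE rmorphB. Qed.

Lemma qdag1 n : qdag (1%:M : 'M[C]_n) = 1%:M.
Proof. by apply/matrixP=> i j; rewrite /qdag !mxE rmorph_nat eq_sym. Qed.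

Lemma qdagT m n p q (A : 'M[C]_(m,n)) (B : 'M[C]_(p,q)) :
  qdag (A *t B) = qdag A *t qdag B.
Proof. by rewrite /qdag map_mxT trmx_tens. Qed.

Lemma tensBl m n p q (A B : 'M[C]_(m,n)) (D : 'M[C]_(p,q)) :
  (A - B) *t D = A *t D - B *t D.
Proof. by apply/matrixP=> i j; rewrite !mxE mulrBl. Qed.

Lemma tens11 m n : (1%:M : 'M[C]_m) *t (1%:M : 'M[C]_n) = 1%:M.
Proof.
apply/matrixP=> i j.
case: (mxtens_indexP i)=> i0 i1; case: (mxtens_indexP j)=> j0 j1.
rewrite tensmxE !mxE (inj_eq (can_inj (@mxtens_indexK m n))) xpair_eqE.
by case: (i0 == j0); case: (i1 == j1); rewrite /= ?mulr1 ?mulr0 ?mul0r.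
Qed.

Lemma psd_congr k n (B : 'M[C]_(k,n)) (A : 'M[C]_n) :
  qpsdmx A -> qpsdmx (B *m A *m qdag B).
Proof.
move=> hA v; have := hA (qdag B *m v).
by rewrite qdagM qdagK !mulmxA.
Qed.

Lemma psdD n (A B : 'M[C]_n) : qpsdmx A -> qpsdmx B -> qpsdmx (A + B).
Proof.
move=> hA hB v; rewrite mulmxDr mulmxDl mxE; exact: addr_ge0.
Qed.

Lemma psd_tr n (A : 'M[C]_n) : qpsdmx A -> 0 <= \tr A.
Proof.
move=> hA; rewrite /mxtrace; apply: sumr_ge0 => i _.
have := hA (delta_mx i 0 : 'cV[C]_n).
have -> : qdag (delta_mx i 0 : 'cV[C]_n) = (delta_mx 0 i : 'rV[C]_n).
  by apply/matrixP=> a b; rewrite /qdag !mxE rmorph_nat andbC.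
by rewrite -rowE -colE !mxE.
Qed.

Lemma sum_tens m n (F : 'I_(m*n) -> C) :
  \sum_a F a = \sum_(i < m) \sum_(k < n) F (mxtens_index (i,k)).
Proof.
rewrite pair_big /= (reindex (@mxtens_index m n)) /=.
  by apply: eq_bigr => -[].
by exists (@mxtens_unindex m n) => x _; rewrite ?mxtens_indexK ?mxtens_unindexK.
Qed.

Lemma psd_tens1 m n (Y : 'M[C]_n) : qpsdmx Y -> qpsdmx ((1%:M : 'M[C]_m) *t Y).
Proof.
move=> hY v.
pose w (i : 'I_m) : 'cV[C]_n := \col_k v (mxtens_index (i,k)) 0.
suff -> : (qdag v *m (1%:M *t Y) *m v) 0 0 = \sum_i (qdag (w i) *m Y *m w i) 0 0.
  by apply: sumr_ge0 => i _; exact: hY.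
rewrite mxE sum_tens; apply: eq_bigr => j _; rewrite mxE; apply: eq_bigr => l _.
rewrite !mxE sum_tens mulr_suml exchange_big /= mulr_suml; apply: eq_bigr => k _.
rewrite (bigD1 j) //= big1 ?addr0 => [|i /negPf ne].
  by rewrite !mxE !mxtens_indexK /= eqxx mul1r.
by rewrite !mxE !mxtens_indexK /= ne mul0r mulr0.
Qed.

End Aux.

Section Main.
Variable R : realType.
Local Notation C := (R[i]).

Lemma inf_dom (A B : set R) :
  (forall x, A x -> 0 <= x) -> (forall x, B x -> 0 <= x) ->
  (forall x, A x -> exists2 y, B y & y <= x) ->
  (forall y, B y -> exists2 x, A x & x <= y) -> inf A = inf B.
Proof.
move=> hA hB hAB hBA.
have lbA : has_lbound A by exists 0 => x /hA.
have lbB : has_lbound B by exists 0 => x /hB.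
have [[a Aa]|nA] := pselect (exists a, A a); last first.
  have eA : A = set0 by apply/seteqP; split => x // Ax; case: nA; exists x.
  have eB : B = set0.
    by apply/seteqP; split => y // /hBA [x Ax _]; case: nA; exists x.
  by rewrite eA eB.
have [b Bb _] := hAB a Aa.
apply/le_anti/andP; split.
  apply: lb_le_inf; first by exists b.
  move=> y /hBA [x Ax xy]; apply: le_trans xy; exact: ge_inf.
apply: lb_le_inf; first by exists a.
move=> x /hAB [y By yx]; apply: le_trans yx; exact: ge_inf.
Qed.

Lemma Re_tr_ge0 n (Y : 'M[C]_n) : qpsdmx Y -> 0 <= complex.Re (\tr Y).
Proof. by move=> /psd_tr; rewrite lecE => /andP[_]. Qed.

Lemma proj_comp m n (W : 'M[C]_(m,n)) : qisometry W ->
  let P := 1%:M - W *m qdag W in qdag P = P /\ P *m P = P.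
Proof.
move=> hW P; split.
  by rewrite /P qdagB qdag1 qdagM qdagK.
rewrite /P mulmxBl mul1mx mulmxBr mulmx1 mulmxA.
rewrite -(mulmxA W) hW mulmx1 opprB addrA subrK. by [].
Qed.

Lemma tr_iso_le m n (W : 'M[C]_(m,n)) (Y : 'M[C]_m) : qisometry W -> qpsdmx Y ->
  complex.Re (\tr (qdag W *m Y *m W)) <= complex.Re (\tr Y).
Proof.
move=> hW hY.
have [hP1 hP2] := proj_comp hW.
set P := 1%:M - W *m qdag W in hP1 hP2.
have := psd_tr (psd_congr P hY).
have -> : \tr (P *m Y *m qdag P) = \tr Y - \tr (qdag W *m Y *m W).
  rewrite hP1 mxtrace_mulC mulmxA hP2 /P mulmxBl mul1mx raddfB.
  have e : \tr (W *m qdag W *m Y) = \tr (qdag W *m Y *m W) by rewrite -mulmxA mxtrace_mulC.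
  by rewrite -e.
by rewrite subr_ge0 lecE => /andP[_].
Qed.

Lemma Hmin_iso m n m' n' (V : 'M[C]_(m',m)) (W : 'M[C]_(n',n))
  (hV : qisometry V) (hW : qisometry W) (Om : 'M[C]_(m*n)) :
  qHmin (qchan (V *t W) Om) = qHmin Om.
Proof.
rewrite /qHmin; congr (- qlog2 _).
set K := V *t W.
have hK : qdag K *m K = 1%:M by rewrite qdagT tensmx_mul hV hW tens11.
apply: inf_dom.
- by move=> _ [Y [hY _] <-]; exact: Re_tr_ge0.
- by move=> _ [Y [hY _] <-]; exact: Re_tr_ge0.
- move=> _ [Y' [hY' hL] <-].
  exists (complex.Re (\tr (qdag W *m Y' *m W))); last exact: tr_iso_le.
  exists (qdag W *m Y' *m W) => //; split.
    by have := psd_congr (qdag W) hY'; rewrite qdagK.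
  have := psd_congr (qdag K) hL; rewrite qdagK.
  rewrite /qloewner_ge mulmxBr mulmxBl /qchan !mulmxA.
  have e1 : qdag K *m K *m Om *m qdag K *m K = Om by rewrite hK mul1mx -mulmxA hK mulmx1.
  rewrite e1.
  by rewrite /K qdagT !tensmx_mul mulmx1 hV.
- move=> _ [Y [hY hL] <-].
  exists (complex.Re (\tr (W *m Y *m qdag W))); last first.
    by rewrite mxtrace_mulC mulmxA hW mul1mx.
  exists (W *m Y *m qdag W) => //; split; first exact: psd_congr.
  have [hP1 hP2] := proj_comp hV.
  set P := 1%:M - V *m qdag V in hP1 hP2.
  have e : (1%:M *t (W *m Y *m qdag W)) - qchan K Om =
     (P *t W) *m (1%:M *t Y) *m qdag (P *t W) + K *m (1%:M *t Y - Om) *m qdag K.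
    rewrite qdagT !tensmx_mul mulmx1 hP1 hP2.
    rewrite mulmxBr mulmxBl /qchan.
    rewrite /K qdagT !tensmx_mul mulmx1 /P tensBl.
    by rewrite addrA subrK.
  rewrite /qloewner_ge e; apply: psdD; apply: psd_congr => //.
  exact: psd_tens1.
Qed.

End Main.

Unset Implicit Arguments. Set Strict Implicit.

Theorem lemma1 (R : realType) (G : CompactGroup R) (dR dA dR' dA' : nat)
  (UR : urep G dR) (UA : urep G dA) (UR' : urep G dR') (UA' : urep G dA')
  (V : 'M[R[i]]_(dR', dR)) (W : 'M[R[i]]_(dA', dA))
  (hV : qisometry V) (hW : qisometry W)
  (hcomm : forall M : 'M[R[i]]_(dR * dA),
      qchan (V *t W) (qtwirl UR UA M) = qtwirl UR' UA' (qchan (V *t W) M))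
  (eta : 'M[R[i]]_dR) (rho : 'M[R[i]]_dA)
  (heta : qdensity eta) (hrho : qdensity rho) :
  qHent UR' UA' (qchan V eta) (qchan W rho) = qHent UR UA eta rho.
Proof.
rewrite /qHent -(Hmin_iso hV hW) hcomm; congr (qHmin (qtwirl _ _ _)).
by rewrite /qchan qdagT !tensmx_mul.
Qed.
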